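(* $\mathfrak{r}_{\mathrm{simult}} \le \max\{\mathfrak{r}_\sigma,\mathfrak{d}\}$.
   Context: For $x\subseteq\omega$ and $y\in[\omega]^\omega$, $y$ reaps $x$ if $y\subseteq^* x$ or $y\subseteq^*\omega\setminus x$ (where $A\subseteq^* B$ means $A\setminus B$ is finite). $\mathfrak{r}_\sigma$ is the least size of $\mathcal{A}\subseteq[\omega]^\omega$ such that for every sequence $\langle x_n:n\in\omega\rangle$ of subsets of $\omega$ there is $y\in\mathcal{A}$ reaping every $x_n$. $\mathfrak{d}$ is the dominating number. $\mathfrak{r}_{\mathrm{simult}}$ is the least size of a family $\mathcal{F}\subseteq([\omega]^\omega)^\omega$ such that for every sequence $\langle A_n\in[\omega]^\omega:n\in\omega\rangle$ there is $\langle B_n:n\in\omega\rangle\in\mathcal{F}$ such that either $B_0\subseteq\omega\setminus A_n$ for some $n$, or $B_n\subseteq A_n$ for all $n$. *)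

(* Defs.v *)
From mathcomp Require Import all_boot.
From mathcomp Require Import boolp classical_sets cardinality.
Set Implicit Arguments. Unset Strict Implicit. Unset Printing Implicit Defensive.
Local Open Scope classical_set_scope.

(* Subsets of omega are [set nat]; [omega]^omega = infinite subsets. *)

Definition almost_subset (A B : set nat) : Prop := finite_set (A `\` B).

(* y reaps x (y is assumed infinite, as y ∈ [omega]^omega) *)
Definition reaps (y x : set nat) : Prop :=
  almost_subset y x \/ almost_subset y (~` x).

Definition r_sigma_family (A : set (set nat)) : Prop :=
  (forall y, A y -> infinite_set y) /\
  (forall x : nat -> set nat, exists2 y, A y & forall n, reaps y (x n)).

Definition le_star (f g : nat -> nat) : Prop :=
  exists m, forall n, (m <= n)%N -> (f n <= g n)%N.

Definition dominating_family (D : set (nat -> nat)) : Prop :=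
  forall f : nat -> nat, exists2 g, D g & le_star f g.

Definition r_simult_family (F : set (nat -> set nat)) : Prop :=
  (forall B, F B -> forall n, infinite_set (B n)) /\
  (forall A : nat -> set nat, (forall n, infinite_set (A n)) ->
     exists2 B, F B &
       ((exists n, B 0%N `<=` ~` A n) \/ (forall n, B n `<=` A n))).

(* Main.v *)
Require Import Defs.
From mathcomp Require Import all_boot.
From mathcomp Require Import boolp classical_sets cardinality functions.
Local Open Scope classical_set_scope.
Local Open Scope card_scope.

Definition Injs {T U} (A : set T) (B : set U) : Prop :=
  exists f : T -> U, (forall x, A x -> B (f x)) /\
    (forall x y, A x -> A y -> f x = f y -> x = y).

Lemma Injs_card {T U} {A : set T} {B : set U} : Injs A B -> A #<= B.
Proof.
move=> [f [fAB finj]].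
have : $| {injfun A >-> B} |.
  apply/injfunPex; exists f; first by move=> x; exact: fAB.
  by move=> x y /set_mem Ax /set_mem Ay; exact: finj.
by case=> g; exact: inj_card_le g.
Qed.

Lemma card_Inj {T} {U : pointedType} (A : set T) (B : set U) : A #<= B -> Injs A B.
Proof.
move=> /pcard_leP /injfunPex [f fAB finj]; exists f; split; first exact: fAB.
by move=> x y Ax Ay; apply: finj; exact: mem_set.
Qed.

Lemma cardeq_bij {T} {U : pointedType} (A : set T) (B : set U) : A #= B ->
  exists f : T -> U, [/\ (forall x, A x -> B (f x)),
    (forall x y, A x -> A y -> f x = f y -> x = y) &
    (forall y, B y -> exists2 x, A x & f x = y)].
Proof.
move=> /pcard_eqP /bijPex [f [fAB finj fsurj]]; exists f; split.
- exact: fAB.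
- by move=> x y Ax Ay; apply: finj; exact: mem_set.
- by move=> y /fsurj [x Ax <-]; exists x.
Qed.

Lemma Injs_trans {T U V} {A : set T} {B : set U} {C : set V} :
  Injs A B -> Injs B C -> Injs A C.
Proof.
move=> [f [fAB fi]] [g [gBC gi]]; exists (g \o f); split.
  by move=> x Ax; apply: gBC; apply: fAB.
by move=> x y Ax Ay /= /gi e; apply: fi => //; apply: e; apply: fAB.
Qed.

Lemma Injs_sub {T} (A B : set T) : A `<=` B -> Injs A B.
Proof. by move=> AB; exists id; split. Qed.

Lemma Injs_refl {T} (A : set T) : Injs A A.
Proof. exact: Injs_sub. Qed.

Lemma graph_Inj {T U} (y0 : U) (A : set T) (B : set U) (G : set (T * U)) :
  (forall x y, G (x, y) -> B y) ->
  (forall x y y', G (x, y) -> G (x, y') -> y = y') ->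
  (forall x x' y, G (x, y) -> G (x', y) -> x = x') ->
  (forall x, A x -> exists y, G (x, y)) -> Injs A B.
Proof.
move=> GB Gf Gi Gd.
pose f x := match pselect (exists y, G (x, y)) with
  | left h => proj1_sig (cid h) | right _ => y0 end.
have fG x : A x -> G (x, f x).
  move=> Ax; rewrite /f; case: pselect => [h|]; last by move=> /(_ (Gd x Ax)).
  by case: (cid h).
exists f; split; first by move=> x /fG /GB.
by move=> x y Ax Ay e; apply: (Gi _ _ (f x) (fG x Ax)); rewrite e; apply: fG.
Qed.

Lemma comparableI {T U} (x0 : T) (y0 : U) (A : set T) (B : set U) :
  Injs A B \/ Injs B A.
Proof.
pose P (G : set (T * U)) := [/\ (forall x y, G (x, y) -> A x /\ B y),
  (forall x y y', G (x, y) -> G (x, y') -> y = y') &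
  (forall x x' y, G (x, y) -> G (x', y) -> x = x')].
have [G [[GAB Gf Gi] Gmax]] : exists G, P G /\ (forall B, G `<` B -> ~ P B).
  apply: Zorn_bigcup => F FP Ftot; split.
  - by move=> x y [M FM Mxy]; have [MA _ _] := FP M FM; apply: MA.
  - move=> x y y' [M FM Mxy] [N FN Nxy].
    have [MN|NM] := Ftot M N FM FN.
      by have [_ Nf _] := FP N FN; apply: (Nf x) => //; apply: MN.
    by have [_ Mf _] := FP M FM; apply: (Mf x) => //; apply: NM.
  - move=> x x' y [M FM Mxy] [N FN Nxy].
    have [MN|NM] := Ftot M N FM FN.
      by have [_ _ Ni] := FP N FN; apply: (Ni _ _ y) => //; apply: MN.
    by have [_ _ Mi] := FP M FM; apply: (Mi _ _ y) => //; apply: NM.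
have [dom|] := pselect (forall x, A x -> exists y, G (x, y)).
  left; apply: (@graph_Inj _ _ y0 A B G) => //.
  by move=> x y /GAB [].
move=> /existsNP [a /not_implyP [Aa na]].
have [ran|] := pselect (forall y, B y -> exists x, G (x, y)).
  right; apply: (@graph_Inj _ _ x0 B A (fun p => G (p.2, p.1))) => //=.
  - by move=> x y /GAB [].
  - by move=> x y y' h1 h2; apply: Gi h1 h2.
  - by move=> x x' y h1 h2; apply: Gf h1 h2.
move=> /existsNP [b /not_implyP [Bb nb]].
exfalso; apply: (Gmax (G `|` [set (a, b)])).
  split; first by move=> p Gp; left.
  move=> /(_ (a, b)) h; apply: na; exists b; apply: h; by right.
split.
- move=> x y [/GAB //|e]; case: e => -> ->; by split.
- move=> x y y' [h1|e1] [h2|e2].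
  + exact: Gf h1 h2.
  + by case: e2 => ex _; exfalso; apply: na; exists y; rewrite -ex.
  + by case: e1 => ex _; exfalso; apply: na; exists y'; rewrite -ex.
  + by case: e1 => _ ->; case: e2 => _ ->.
- move=> x x' y [h1|e1] [h2|e2].
  + exact: Gi h1 h2.
  + by case: e2 => _ ey; exfalso; apply: nb; exists x; rewrite -ey.
  + by case: e1 => _ ey; exfalso; apply: nb; exists x'; rewrite -ey.
  + by case: e1 => -> _; case: e2 => -> _.
Qed.


Lemma Injs_prod {T U V W} {A : set T} {A' : set U} {B : set V} {B' : set W} :
  Injs A A' -> Injs B B' -> Injs (A `*` B) (A' `*` B').
Proof.
move=> [f [fA fi]] [g [gB gi]]; exists (fun p => (f p.1, g p.2)); split.
  by move=> [a b] [/= Aa Bb]; split; [apply: fA | apply: gB].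
move=> [a b] [a' b'] [/= Aa Bb] [/= Aa' Bb'] [e1 e2].
by rewrite (fi _ _ Aa Aa' e1) (gi _ _ Bb Bb' e2).
Qed.

Definition gfun {P Q : Type} (q0 : Q) (G : set (P * Q)) (p : P) : Q :=
  match pselect (exists z, G (p, z)) with
  | left h => proj1_sig (cid h) | right _ => q0 end.

Lemma gfunP {P Q : Type} (q0 : Q) (G : set (P * Q)) p :
  (exists z, G (p, z)) -> G (p, gfun q0 G p).
Proof. by rewrite /gfun; case: pselect => [h _|//]; case: (cid h). Qed.

Lemma square (T : pointedType) (X : set T) (Xinf : infinite_set X) :
  Injs (X `*` X) X.
Proof.
pose R (G : set ((T * T) * T)) z := exists p, G (p, z).
pose P0 (G : set ((T * T) * T)) := [/\ (forall p z, G (p, z) -> X z),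
  (forall p z z', G (p, z) -> G (p, z') -> z = z'),
  (forall p p' z, G (p, z) -> G (p', z) -> p = p') &
  (forall p, (exists z, G (p, z)) <-> (R G p.1 /\ R G p.2))].
have [e [eX ei]] : Injs [set: nat] X by apply: card_Inj; apply/infiniteP.
have {}ei : injective e by move=> x y; apply: ei.
have [pi [_ pii pis]] := @cardeq_bij _ _ _ _ card_nat2.
pose G0 : set ((T * T) * T) :=
  [set q | exists i j, q = ((e i, e j), e (pi (i, j)))].
have eR k : R G0 (e k).
  have [[a b] _ <-] := pis k I.
  by exists (e a, e b); exists a, b.
have RG0 z : R G0 z -> exists k, z = e k.
  by move=> [p [i [j [_ ->]]]]; exists (pi (i, j)).
have PG0 : P0 G0.
  split.
  - by move=> p z [i [j [_ ->]]]; apply: eX.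
  - move=> p z z' [i [j e1]] [i' [j' e2]].
    case: e1 => ep ez; subst p z; case: e2 => /ei e1 /ei e2 ->.
    by rewrite e1 ?e2.
  - move=> p p' z [i [j e1]] [i' [j' e2]].
    case: e1 => ep e3; subst p; case: e2 => ep' e4; subst p'.
    by have := pii (i, j) (i', j') I I (ei _ _ (etrans (esym e3) e4)); case=> -> ->.
  - move=> [u v]; split.
      move=> [z [i [j e1]]]; case: e1 => -> -> _; split; exact: eR.
    move=> [/= /RG0 [i ->] /RG0 [j ->]].
    by exists (e (pi (i, j))); exists i, j.
pose P G := P0 G /\ (G = set0 \/ G0 `<=` G).
have [G [[[GX Gf Gi Gd] G0G] Gmax]] : exists G, P G /\ (forall B, G `<` B -> ~ P B).
  apply: Zorn_bigcup => F FP Ftot.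
  have common M N p q : F M -> F N -> M p -> N q ->
      exists K, [/\ F K, K p & K q].
    move=> FM FN Mp Nq; have [MN|NM] := Ftot M N FM FN.
      by exists N; split => //; apply: MN.
    by exists M; split => //; apply: NM.
  split; first split.
  - by move=> p z [M FM Mpz]; have [[MX _ _ _] _] := FP M FM; apply: MX Mpz.
  - move=> p z z' [M FM h1] [N FN h2].
    have [K [FK h1' h2']] := common _ _ _ _ FM FN h1 h2.
    by have [[_ Kf _ _] _] := FP K FK; apply: Kf h1' h2'.
  - move=> p p' z [M FM h1] [N FN h2].
    have [K [FK h1' h2']] := common _ _ _ _ FM FN h1 h2.
    by have [[_ _ Ki _] _] := FP K FK; apply: Ki h1' h2'.
  - move=> p; split.
      move=> [z [M FM h]]; have [[_ _ _ Md] _] := FP M FM.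
      have [[p1 h1] [p2 h2]] := (Md p).1 (ex_intro _ z h).
      by split; [exists p1; exists M | exists p2; exists M].
    move=> [[p1 [M FM h1]] [p2 [N FN h2]]].
    have [K [FK h1' h2']] := common _ _ _ _ FM FN h1 h2.
    have [[_ _ _ Kd] _] := FP K FK.
    have [z Kz] := (Kd p).2 (conj (ex_intro _ p1 h1') (ex_intro _ p2 h2')).
    by exists z; exists K.
  - have [[M [FM G0M]]|nM] := pselect (exists M, F M /\ G0 `<=` M).
      by right => q G0q; exists M => //; apply: G0M.
    left; apply/seteqP; split => // q [M FM Mq].
    have [_ [M0|G0M]] := FP M FM; first by rewrite M0 in Mq.
    by exfalso; apply: nM; exists M.
have {}G0G : G0 `<=` G.
  case: G0G => // G0e; exfalso; apply: (Gmax G0); last by split => //; right.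
  rewrite G0e; split => //; move=> /(_ ((e 0, e 0), e (pi (0, 0)))%N) h.
  by apply: h; exists 0%N, 0%N.
pose S := R G.
have SX z : S z -> X z by move=> [p /GX].
have eS k : S (e k).
  by have [p Gp] := eR k; exists p; apply: G0G.
pose g := gfun point G.
have gS u v : S u -> S v -> G ((u, v), g (u, v)).
  by move=> Su Sv; apply: gfunP; apply/(Gd (u, v)).
have injSS : Injs (S `*` S) S.
  exists g; split; first by move=> [u v] [/= Su Sv]; exists (u, v); apply: gS.
  move=> [u v] [u' v'] [/= Su Sv] [/= Su' Sv'] eg.
  by apply: (Gi _ _ (g (u, v))) => //; [apply: gS | rewrite eg; apply: gS].
have [[j [jX ji]]|nj] := pselect (Injs S (X `\` S)); last first.
  have [|[k [kS ki]]] := comparableI point point S (X `\` S); first by [].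
  have injXSS : Injs X (S `*` S).
    exists (fun x => if pselect (S x) then (x, e 0%N) else (k x, e 1%N)).
    split.
      move=> x Xx; case: pselect => Sx /=; split; try exact: eS; first by [].
      by apply: kS.
    move=> x y Xx Xy; case: pselect => Sx; case: pselect => Sy.
    - by case.
    - by case=> _ /ei/eqP.
    - by case=> _ /ei/eqP.
    - by case=> /ki; apply.
  have injXS := Injs_trans injXSS injSS.
  apply: Injs_trans (Injs_prod injXS injXS) _.
  apply: Injs_trans injSS _; exact: Injs_sub.
exfalso.
have gR u v : S u -> S v -> S (g (u, v)) by move=> Su Sv; exists (u, v); apply: gS.
have GS p z : G (p, z) -> S p.1 /\ S p.2 by move=> h; apply/(Gd p); exists z.
have notS u : S u -> ~ S (j u) by move=> /jX [].
pose W := (S `*` S) `*` [set t : nat | (t < 3)%N].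
have injWS : Injs W S.
  exists (fun w => g (g w.1, e w.2)); split.
    by move=> [[u v] t] [[/= Su Sv] _]; apply: (gR) => //; apply: (gR).
  move=> [[u v] t] [[u' v'] t'] [[/= Su Sv] _] [[/= Su' Sv'] _] /= h.
  have h1 := gS _ _ (gR _ _ Su Sv) (eS t).
  have h2 := gS _ _ (gR _ _ Su' Sv') (eS t'); rewrite -h in h2.
  case: (Gi _ _ _ h1 h2) => h3 /ei ->.
  have h4 := gS _ _ Su Sv.
  have h5 := gS _ _ Su' Sv'; rewrite -h3 in h5.
  by case: (Gi _ _ _ h4 h5) => -> ->.
have injSW : Injs S W.
  exists (fun z => ((z, z), 0%N)); split; first by move=> z Sz; split.
  by move=> x y _ _ [].
have WS : W #= S by apply: Cantor_Bernstein; apply: Injs_card.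
have [b [bW bi bs]] := @cardeq_bij _ _ _ _ WS.
pose phi (w : (T * T) * nat) :=
  if w.2 == 0%N then (w.1.1, j w.1.2) else
  if w.2 == 1%N then (j w.1.1, w.1.2) else (j w.1.1, j w.1.2).
have Wt t : (t < 3)%N -> [\/ t = 0%N, t = 1%N | t = 2%N].
  by case: t => [|[|[|]]] //= _; [constructor 1|constructor 2|constructor 3].
have phiS w : W w -> ~ (S (phi w).1 /\ S (phi w).2).
  move: w => [[u v] t] [[/= Su Sv] /Wt [] ->] [] /=.
  - by move=> _; apply: (notS).
  - by move=> + _; apply: (notS).
  - by move=> _; apply: (notS).
have phii w w' : W w -> W w' -> phi w = phi w' -> w = w'.
  move: w w' => [[u v] t] [[u' v'] t'] [[/= Su Sv] /Wt Ht] [[/= Su' Sv'] /Wt Ht'].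
  case: Ht => ->; case: Ht' => -> /=; case.
  all: try by move=> -> /(ji _ _ Sv Sv') ->.
  all: try by move=> /(ji _ _ Su Su') -> ->.
  all: try by move=> /(ji _ _ Su Su') -> /(ji _ _ Sv Sv') ->.
  all: try by move=> e1 e2; exfalso; apply: (notS _ Su'); rewrite -e1.
  all: try by move=> e1 e2; exfalso; apply: (notS _ Su); rewrite e1.
  all: try by move=> e1 e2; exfalso; apply: (notS _ Sv'); rewrite -e2.
  all: try by move=> e1 e2; exfalso; apply: (notS _ Sv); rewrite e2.
pose G' := G `|` [set q | exists2 w, W w & q = (phi w, j (b w))].
have RG' z : R G' z <-> S z \/ exists2 u, S u & z = j u.
  split.
    move=> [p [h|[w Ww e1]]]; first by left; exists p.
    by right; exists (b w); [apply: bW | case: e1].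
  move=> [[p Gp]|[u2 Su2 ->]]; first by exists p; left.
  have [w Ww bwu] := bs u2 Su2.
  by exists (phi w); right; exists w => //; rewrite bwu.
have phiR w : W w -> R G' (phi w).1 /\ R G' (phi w).2.
  move: w => [[u1 v1] t1] [[/= Su1 Sv1] /Wt [] ->] /=;
  split; apply/RG'; solve [by left | by right; exists u1 | by right; exists v1].
have PG' : P G'.
  split; last by right => q /G0G; left.
  split.
  - move=> p z [h|[w Ww e1]]; first exact: GX h.
    by case: e1 => _ ->; have [] := jX _ (bW _ Ww).
  - move=> p z z' [h1|[w Ww e1]] [h2|[w' Ww' e2]].
    + exact: Gf h1 h2.
    + by case: e2 => ep _; exfalso; apply: (phiS _ Ww'); rewrite -ep; apply: GS h1.
    + by case: e1 => ep _; exfalso; apply: (phiS _ Ww); rewrite -ep; apply: GS h2.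
    + case: e1 => ep ->; case: e2 => ep' ->.
      by rewrite (phii _ _ Ww Ww' (etrans (esym ep) ep')).
  - move=> p p' z [h1|[w Ww e1]] [h2|[w' Ww' e2]].
    + exact: Gi h1 h2.
    + by case: e2 => _ ez; exfalso; apply: (notS _ (bW _ Ww')); rewrite -ez; exists p.
    + by case: e1 => _ ez; exfalso; apply: (notS _ (bW _ Ww)); rewrite -ez; exists p'.
    + case: e1 => -> ez; case: e2 => -> ez'.
      have := etrans (esym ez) ez' => /(ji _ _ (bW _ Ww) (bW _ Ww')) /(bi _ _ Ww Ww') ->.
      done.
  - move=> [u v]; split.
      move=> [z [h|[w Ww e1]]].
        by have [] := GS _ _ h; split; apply/RG'; left.
      by case: e1 => -> _; apply: phiR.
    move=> [/= /RG' Hu /RG' Hv].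
    case: Hu => [Su|[u0 Su0 eu]]; case: Hv => [Sv|[v0 Sv0 ev]].
    + by have [z Gz] := (Gd (u, v)).2 (conj Su Sv); exists z; left.
    + exists (j (b ((u, v0), 0%N))); right; exists ((u, v0), 0%N) => //.
      by rewrite ev.
    + exists (j (b ((u0, v), 1%N))); right; exists ((u0, v), 1%N) => //.
      by rewrite eu.
    + exists (j (b ((u0, v0), 2%N))); right; exists ((u0, v0), 2%N) => //.
      by rewrite eu ev.
apply: (Gmax G') => //; split; first by move=> q h; left.
move=> /(_ (phi ((e 0%N, e 0%N), 0%N), j (b ((e 0%N, e 0%N), 0%N)))) h.
have Ww0 : W ((e 0%N, e 0%N), 0%N) by split => //; split; apply: eS.
have := h (or_intror (ex_intro2 _ _ _ Ww0 erefl)).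
move=> h0; apply: (notS _ (bW _ Ww0)); by exists (phi ((e 0%N, e 0%N), 0%N)).
Qed.



Lemma inf_of_inj {T} (Z : set T) (f : nat -> T) :
  (forall k, Z (f k)) -> injective f -> infinite_set Z.
Proof.
move=> fZ fi; apply/infiniteP; apply: Injs_card.
by exists f; split => // x y _ _; apply: fi.
Qed.

Fixpoint ssum (h : nat -> nat) k := if k is k'.+1 then h k' + ssum h k' else 0.

Lemma ssum_ge h k i : (i < k)%N -> (h i <= ssum h k)%N.
Proof.
elim: k => [//|k IH]; rewrite ltnS leq_eqVlt => /orP [/eqP ->|/IH] /=.
  exact: leq_addr.
by move=> le; apply: leq_trans le (leq_addl _ _).
Qed.

Lemma fin_bound {Z : set nat} : finite_set Z -> exists k, forall z, Z z -> (z < k)%N.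
Proof.
move=> [n Zn]; have [h [hI hi hs]] := @cardeq_bij _ _ _ _ (card_esym Zn).
exists (ssum h n).+1 => z /hs [i iI <-]; rewrite ltnS; exact: ssum_ge.
Qed.

Lemma cut_inf (y : set nat) c : infinite_set y -> infinite_set (y `\` `I_c).
Proof.
move=> yi yc; apply: yi.
apply: (@sub_finite_set _ _ ((y `\` `I_c) `|` `I_c)).
  by move=> z yz; have [zc|zc] := pselect (`I_c z); [right|left].
by rewrite finite_setU; split => //; apply: finite_II.
Qed.

Definition Bf (y : set nat) (g : nat -> nat) (s : seq nat) (n : nat) : set nat :=
  y `\` `I_(if (n < size s)%N then nth 0%N s n else g n).

Lemma A_infinite (A : set (set nat)) : r_sigma_family A -> infinite_set A.
Proof.
move=> [Ainf Arp] [n An].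
have [h [hI hi hs]] := @cardeq_bij _ _ _ _ (card_esym An).
pose sp (y : set nat) : set nat :=
  match pselect (exists e : nat -> nat, (forall k, y (e k)) /\ injective e) with
  | left H => (proj1_sig (cid H)) @` [set k | ~~ odd k] | right _ => set0 end.
have [y Ay yr] := Arp (fun i => sp (h i)).
have [i iI hiy] := hs y Ay.
have := yr i; rewrite hiy.
have [e [ey ei]] : exists e : nat -> nat, (forall k, y (e k)) /\ injective e.
  have [e [eY eI]] : Injs [set: nat] y by apply: card_Inj; apply/infiniteP; apply: Ainf.
  by exists e; split => [k|x z]; [apply: eY | apply: eI].
rewrite /sp; case: pselect => [H|]; last by move=> nE; exfalso; apply: nE; exists e.
case: (cid H) => e' [e'y e'i] /= [].
- apply: (@inf_of_inj _ _ (fun k => e' k.*2.+1)).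
    move=> k; split => //; move=> [m mE /e'i em].
    by move: mE; rewrite em /= odd_double.
  by move=> a b /e'i [] /(can_inj doubleK).
- apply: (@inf_of_inj _ _ (fun k => e' k.*2)).
    by move=> k; split => //; move=> H0; apply: H0; exists k.*2 => //; rewrite /= odd_double.
  by move=> a b /e'i /(can_inj doubleK).
Qed.

Lemma D_infinite (D : set (nat -> nat)) : dominating_family D -> infinite_set D.
Proof.
move=> HD [n Dn]; have [h [hI hi hs]] := @cardeq_bij _ _ _ _ (card_esym Dn).
pose f m := (ssum (fun i => h i m) n).+1.
have [g Dg [m0 hm]] := HD f.
have [i iI hig] := hs g Dg; rewrite -hig in hm.
have := hm m0 (leqnn _); rewrite /f ltnNge => /negP; apply.
exact: ssum_ge.
Qed.

Theorem mainTheorem6 :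
  forall (A : set (set nat)) (D : set (nat -> nat)),
    r_sigma_family A -> dominating_family D ->
    exists F : set (nat -> set nat),
      r_simult_family F /\ (F #<= A \/ F #<= D).
Proof.
move=> A D HA HD.
pose P := A `*` (D `*` [set: seq nat]).
pose F := [set B | exists t, P t /\ B = Bf t.1 t.2.1 t.2.2].
exists F; split.
  split.
    move=> B [[y [g s]] [[/= Ay _] ->]] n; apply: cut_inf; exact: HA.1 y Ay.
  move=> An Ainf; have [y Ay yr] := HA.2 An.
  have [g0 Dg0 _] := HD id.
  have [[n hn]|nh] := pselect (exists n, almost_subset y (~` An n)).
    have [k hk] := fin_bound hn.
    exists (Bf y g0 [:: k]); first by exists (y, (g0, [:: k])).
    left; exists n => z [yz zk] Az; apply: zk; apply: hk; split => //.
  have h n : exists k, forall z, (y `\` An n) z -> (z < k)%N.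
    apply: fin_bound; case: (yr n) => // hn; exfalso; apply: nh; by exists n.
  have [hf hfP] := choice h.
  have [g Dg [m hm]] := HD hf.
  exists (Bf y g (mkseq hf m)); first by exists (y, (g, mkseq hf m)).
  right => n z [yz zn].
  have [//|nA] := pselect (An n z); exfalso; apply: zn.
  have := hfP n z (conj yz nA) => /leq_trans; apply.
  rewrite size_mkseq; case: ifP => nm; first by rewrite nth_mkseq.
  by apply: hm; rewrite leqNgt nm.
have FP : Injs F P.
  pose f (B : nat -> set nat) : set nat * ((nat -> nat) * seq nat) :=
    match pselect (exists t, P t /\ B = Bf t.1 t.2.1 t.2.2) with
    | left H => proj1_sig (cid H) | right _ => (set0, (id, [::])) end.
  have fP B : F B -> P (f B) /\ B = Bf (f B).1 (f B).2.1 (f B).2.2.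
    by rewrite /f; case: pselect => [H _|//]; case: (cid H).
  exists f; split; first by move=> B /fP [].
  by move=> B B' /fP [_ e1] /fP [_ e2] ef; rewrite e1 e2 ef.
have Sq : Injs [set: seq nat] [set: nat].
  by exists pickle; split => // x y _ _; apply: (pcan_inj pickleK).
have [AD|DA] := comparableI set0 id A D.
  have Dinf := @D_infinite D HD.
  have natD : Injs [set: nat] D by apply: card_Inj; apply/infiniteP.
  right; apply: Injs_card.
  apply: (Injs_trans FP).
  apply: (Injs_trans (Injs_prod AD (Injs_prod (Injs_refl D) (Injs_trans Sq natD)))).
  apply: (Injs_trans (Injs_prod (Injs_refl D) (square _ _ Dinf))).
  exact: square _ _ Dinf.
have Ainf := @A_infinite A HA.
have natA : Injs [set: nat] A by apply: card_Inj; apply/infiniteP.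
left; apply: Injs_card.
apply: (Injs_trans FP).
apply: (Injs_trans (Injs_prod (Injs_refl A) (Injs_prod DA (Injs_trans Sq natA)))).
apply: (Injs_trans (Injs_prod (Injs_refl A) (square _ _ Ainf))).
exact: square _ _ Ainf.
Qed.
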